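(* Let $p\in\mathbb{C}[x]$ of degree $n\ge2$ have $k\ge2$ distinct roots, let $\hat z_1,\dots,\hat z_n\in\mathbb{C}$ with $\|p-p_n\prod_j(x-\hat z_j)\|_1\le 2^{-b}\|p\|_1$, and assume $b\ge b_0$, where $b_0$ is the smallest integer that is a power of two, is at least $\max(8n,n\log n)$, and for all $i=1,\dots,k$ satisfies $$2^{-b/(2m_i)}\le\tfrac{1}{2n^2},\quad 2^{-b/(2m_i)}\le\tfrac{\sigma_i}{2n},\quad 2^{-b/2}\le\tfrac{|P_i|}{16(n+1)2^{\tau_p}M(z_i)^n},$$ $$2^{-b/(2m_i)}<\min\Big(\big(\tfrac{\sigma_i}{4n}\big)^8,\tfrac{\sigma_i}{1024n^2}\Big),\quad 2^{-b/8}<\min\Big(\tfrac1{16},\tfrac{|P_i|}{(n+1)2^{2n\Gamma_p+8n}}\Big).$$ Let $Z_i$ denote the set of those $\hat z_j$ lying in $\Delta(z_i,2^{-b/(2m_i)})$. Then for $i\ne j$, $\hat z\in Z_i$ and $\hat z'\in Z_j$, $$|\hat z-\hat z'|\ge 2\big(2^{-b/(16m_i)}+2^{-b/(16m_j)}\big).$$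
   Context: Logarithms base 2; $M(x)=\max(1,|x|)$; $\Delta(z,r)$ closed disk. $p=\sum_ip_ix^i=p_n\prod_{j=1}^k(x-z_j)^{m_j}$ with distinct roots $z_j$, multiplicities $m_j$; $\|p\|_1=\sum|p_i|$; $\tau_p$ smallest non-negative integer with $|p_i|/|p_n|\le 2^{\tau_p}$ for $i<n$; $\Gamma_p:=\max(1,\max_j\log|z_j|)$; $\sigma_i:=\min_{j\ne i}|z_i-z_j|$; $P_i:=\prod_{j\ne i}(z_i-z_j)^{m_j}$. *)

(* Defs.v *)
(* Complex numbers are modelled by an arbitrary
   numClosedFieldType C (algebraically closed field with conjugation,
   order and norm; the complex numbers are an instance). *)
From HB Require Import structures.
From mathcomp Require Import all_boot all_order all_algebra.
Set Implicit Arguments. Unset Strict Implicit. Unset Printing Implicit Defensive.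
Import Order.TTheory GRing.Theory Num.Theory.
Local Open Scope ring_scope.

Section Defs.
Variable C : numClosedFieldType.

Definition norm1 (q : {poly C}) : C := \sum_(i < size q) `|q`_i|.

Definition Mabs (x : C) : C := Num.max 1 `|x|.

(* 2^(-b/d) as a positive real number in C: the nonnegative d-th root of 2^-b *)
Definition pow2m (b d : nat) : C := d.-root ((2%:R : C) ^- b).

(* sigma_i = min_{j <> i} |z_i - z_j|.  The neutral element of the fold is
   sum_j |z_i - z_j|, which dominates every term, so when k >= 2 this is
   exactly the minimum over j <> i. *)
Definition sigma k (z : 'I_k -> C) (i : 'I_k) : C :=
  \big[Num.min/ \sum_(j < k) `|z i - z j|]_(j < k | j != i) `|z i - z j|.

Definition Pprod k (z : 'I_k -> C) (m : 'I_k -> nat) (i : 'I_k) : C :=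
  \prod_(j < k | j != i) (z i - z j) ^+ m j.

(* 2^{Gamma_p} where Gamma_p = max(1, max_j log2 |z_j|), i.e.
   2^{Gamma_p} = max(2, max_j |z_j|). *)
Definition twoGamma k (z : 'I_k -> C) : C := \big[Num.max/2%:R]_(j < k) `|z j|.

Definition tau_ok (p : {poly C}) (t : nat) : Prop :=
  forall i : nat, (i < (size p).-1)%N -> `|p`_i| / `|lead_coef p| <= (2%:R : C) ^+ t.
Definition is_tau (p : {poly C}) (t : nat) : Prop :=
  tau_ok p t /\ forall t', tau_ok p t' -> (t <= t')%N.

Definition b0_cond (n k : nat) (z : 'I_k -> C) (m : 'I_k -> nat) (tau : nat)
    (b0 : nat) : Prop :=
  (8 * n <= b0)%N /\ (n ^ n <= 2 ^ b0)%N (* b0 >= n log2 n *) /\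
  forall i : 'I_k,
    [/\ pow2m b0 (2 * m i) <= ((2 * n ^ 2)%:R)^-1,
        pow2m b0 (2 * m i) <= sigma z i / (2 * n)%:R,
        pow2m b0 2 <= `|Pprod z m i| /
           ((16 * n.+1)%:R * (2%:R) ^+ tau * Mabs (z i) ^+ n),
        pow2m b0 (2 * m i) <
           Num.min ((sigma z i / (4 * n)%:R) ^+ 8) (sigma z i / (1024 * n ^ 2)%:R)
      & pow2m b0 8 <
           Num.min ((16%:R)^-1)
             (`|Pprod z m i| / ((n.+1)%:R * twoGamma z ^+ (2 * n) * (2%:R) ^+ (8 * n)))].

Definition is_pow2 (b : nat) : Prop := exists e : nat, b = (2 ^ e)%N.

Definition is_b0 n k (z : 'I_k -> C) (m : 'I_k -> nat) (tau : nat) (b0 : nat) : Prop :=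
  is_pow2 b0 /\ b0_cond n z m tau b0 /\
  forall b', is_pow2 b' -> b0_cond n z m tau b' -> (b0 <= b')%N.

End Defs.
Arguments pow2m {C} b d.

(* Main.v *)
Require Import Defs.
From HB Require Import structures.
From mathcomp Require Import all_boot all_order all_algebra.
From mathcomp Require Import ring.
Import Order.TTheory GRing.Theory Num.Theory.
Local Open Scope ring_scope.

Section H.
Variable C : numClosedFieldType.

Lemma min_ge0 (x y : C) : 0 <= x -> 0 <= y -> 0 <= Num.min x y.
Proof. by move=> hx hy; rewrite /Order.min; case: ifP. Qed.

Lemma min_le_l (x y : C) : x \is Num.real -> y \is Num.real -> Num.min x y <= x.
Proof. move=> hx hy; case: (real_leP hx hy) => // /ltW //. Qed.

Lemma min_le_r (x y : C) : x \is Num.real -> y \is Num.real -> Num.min x y <= y.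
Proof. move=> hx hy; case: (real_leP hx hy) => //. Qed.

Lemma sigma_ge0 k (z : 'I_k -> C) i : 0 <= sigma z i.
Proof.
rewrite /sigma; apply: (big_ind (fun x => 0 <= x)) => //.
  by apply: sumr_ge0 => j _.
exact: min_ge0.
Qed.

Lemma bigmin_le_seq (I : eqType) (r : seq I) (P : pred I) (F : I -> C) x0 j :
  x0 \is Num.real -> (forall i, F i \is Num.real) -> j \in r -> P j ->
  \big[Num.min/x0]_(i <- r | P i) F i <= F j.
Proof.
move=> hx0 hF; elim: r => [//|a r IH]; rewrite in_cons big_cons => /orP[/eqP-> Pj|jr Pj].
  by rewrite Pj; apply: min_le_l => //; apply: bigmin_real.
have hB := IH jr Pj; case: ifP => // Pa.
apply: le_trans hB; apply: min_le_r => //; exact: bigmin_real.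
Qed.

Lemma sigma_le k (z : 'I_k -> C) i j : i != j -> sigma z i <= `|z i - z j|.
Proof.
move=> ij; rewrite /sigma; apply: bigmin_le_seq.
- exact/ger0_real/sumr_ge0.
- by move=> l; exact: ger0_real.
- exact: mem_index_enum.
- by rewrite eq_sym.
Qed.

Lemma pow2m_ge0 b d : 0 <= pow2m b d :> C.
Proof.
case: d => [|d]; first by rewrite /pow2m root0C.
by rewrite /pow2m rootC_ge0 // invr_ge0 exprn_ge0 // ler0n.
Qed.

Lemma pow2m_mono b0 b d : (b0 <= b)%N -> (0 < d)%N -> pow2m b d <= pow2m b0 d :> C.
Proof.
move=> hb hd; rewrite /pow2m ler_rootC //; last 2 first.
- by rewrite qualifE /= invr_ge0 exprn_ge0 // ler0n.
- by rewrite qualifE /= invr_ge0 exprn_ge0 // ler0n.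
rewrite -(subnKC hb) exprD invfM ler_piMr //.
  by rewrite invr_ge0 exprn_ge0 // ler0n.
rewrite invf_le1; first by apply: exprn_ege1; rewrite ler1n.
by rewrite exprn_gt0 // ltr0n.
Qed.

Lemma pow2m_8 b m : (0 < m)%N -> pow2m b (16 * m) ^+ 8 = pow2m b (2 * m) :> C.
Proof.
move=> hm; apply/eqP; rewrite -(@eqrXn2 _ (2 * m)) ?muln_gt0 //; last 2 first.
- by rewrite exprn_ge0 // pow2m_ge0.
- exact: pow2m_ge0.
rewrite -exprM mulnA [(8 * 2)%N]/= /pow2m !rootCK ?muln_gt0 //.
Qed.

End H.
Arguments sigma_ge0 {C k}.
Arguments sigma_le {C k}.
Arguments pow2m_ge0 {C}.

Theorem lemma9 (C : numClosedFieldType) (p : {poly C}) (n k : nat)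
  (z : 'I_k -> C) (m : 'I_k -> nat) (zhat : 'I_n -> C) (b b0 tau : nat) :
  (2 <= n)%N -> size p = n.+1 -> (2 <= k)%N ->
  injective z -> (forall i, (0 < m i)%N) ->
  p = lead_coef p *: \prod_(j < k) ('X - (z j)%:P) ^+ m j ->
  norm1 (p - lead_coef p *: \prod_(j < n) ('X - (zhat j)%:P))
    <= (2%:R : C) ^- b * norm1 p ->
  is_tau p tau ->
  is_b0 n z m tau b0 ->
  (b0 <= b)%N ->
  forall (i j : 'I_k) (a a' : 'I_n), i != j ->
    `|zhat a - z i| <= pow2m b (2 * m i) ->
    `|zhat a' - z j| <= pow2m b (2 * m j) ->
    2%:R * (pow2m b (16 * m i) + pow2m b (16 * m j)) <= `|zhat a - zhat a'|.
Proof.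
move=> n2 _ _ _ mpos _ _ _ [_ [[_ [_ hc]] _]] hb i j a a' ij hai haj.
set d := `|z i - z j|.
have d0 : 0 <= d by exact: normr_ge0.
have n0 : (0 < n)%N by apply: leq_trans n2.
have key : forall l, sigma z l <= d ->
    pow2m b (2 * m l) <= d / 4%:R /\ pow2m b (16 * m l) <= d / 8%:R.
  move=> l hl; have [c1 c2 c3 c4 c5] := hc l.
  have ml := mpos l.
  have hmono : pow2m b (2 * m l) <= pow2m b0 (2 * m l) :> C.
    by apply: pow2m_mono => //; rewrite muln_gt0 ml.
  have s0 := sigma_ge0 z l.
  have np : (0 < n%:R :> C) by rewrite ltr0n.
  split.
    apply: le_trans hmono _; apply: le_trans c2 _.
    apply: le_trans (_ : d / (2 * n)%:R <= _).
      by apply: ler_wpM2r => //; rewrite invr_ge0 ler0n.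
    apply: ler_wpM2l => //; rewrite lef_pV2 ?qualifE /= ?ltr0n ?muln_gt0 //.
    by rewrite ler_nat; rewrite (_ : 4 = 2 * 2)%N // leq_mul2l.
  have y8 : pow2m b (16 * m l) ^+ 8 < (sigma z l / (4 * n)%:R) ^+ 8.
    rewrite pow2m_8 //; apply: le_lt_trans hmono _; apply: lt_le_trans c4 _.
    apply: min_le_l; apply: ger0_real.
      by rewrite exprn_ge0 // divr_ge0 // ler0n.
    by rewrite divr_ge0 // ler0n.
  have y : pow2m b (16 * m l) < sigma z l / (4 * n)%:R.
    have q0 : 0 <= sigma z l / (4 * n)%:R by rewrite divr_ge0 // ler0n.
    rewrite real_ltNge ?ger0_real ?pow2m_ge0 //; apply/negP => hle.
    move: (lerXn2r 8 q0 (pow2m_ge0 _ _) hle).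
    by move=> /= /(lt_le_trans y8); rewrite ltxx.
  apply: (ltW (lt_le_trans y _)).
  apply: le_trans (_ : d / (4 * n)%:R <= _).
    by apply: ler_wpM2r => //; rewrite invr_ge0 ler0n.
  apply: ler_wpM2l => //; rewrite lef_pV2 ?qualifE /= ?ltr0n ?muln_gt0 //.
  by rewrite ler_nat; rewrite (_ : 8 = 4 * 2)%N // leq_mul2l.
have [ri yi] := key i (sigma_le z _ _ ij).
have sj : sigma z j <= d by rewrite /d distrC; apply: sigma_le; rewrite eq_sym.
have [rj yj] := key j sj.
have tri : d <= `|zhat a - z i| + `|zhat a - zhat a'| + `|zhat a' - z j|.
  rewrite /d (distrC (zhat a) (z i)).
  have -> : z i - z j = (z i - zhat a) + (zhat a - zhat a') + (zhat a' - z j)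
    by ring.
  by apply: le_trans (ler_normD _ _) _; apply: lerD => //; exact: ler_normD.
have h1 : 2%:R * (pow2m b (16 * m i) + pow2m b (16 * m j)) + `|zhat a - z i|
           + `|zhat a' - z j| <= d.
  have -> : d = 2%:R * (d / 8%:R + d / 8%:R) + d / 4%:R + d / 4%:R.
    by field.
  apply: lerD; last exact: le_trans haj rj.
  apply: lerD; last exact: le_trans hai ri.
  by apply: ler_wpM2l; [rewrite ler0n | apply: lerD].
have := le_trans h1 tri; rewrite -subr_ge0 => H; rewrite -subr_ge0.
set X := 2%:R * _ in H *.
by have <- : `|zhat a - z i| + `|zhat a - zhat a'| + `|zhat a' - z j|
  - (X + `|zhat a - z i| + `|zhat a' - z j|) = `|zhat a - zhat a'| - X by ring.
Qed.
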